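(* Let $\mathcal C$ be a hereditary class of graphs with infinite VC-dimension and let $H=(A\cup B,E)$ be a bipartite graph with bipartition $(A,B)$. Then $\mathcal C$ contains a graph $G$ whose vertex set admits a partition $(A',B')$ such that deleting from $G$ all edges with both ends in $A'$ and all edges with both ends in $B'$ yields a graph isomorphic to $H$ via an isomorphism mapping $A'$ onto $A$ and $B'$ onto $B$ (i.e. $H$ is a bipartisation of $G$).
   Context: A class of graphs is hereditary if it is closed under isomorphism and under taking induced subgraphs. For a graph $G$ and $v\in V(G)$, $N[v]$ is the closed neighbourhood. A set $X\subseteq V(G)$ is shattered if for every $S\subseteq X$ there is a vertex $v$ with $N[v]\cap X=S$; the VC-dimension of $G$ is the largest size of a shattered set; a class has infinite VC-dimension if these are unbounded over the class. A bipartite graph $H=(A\cup B,E)$ is a bipartisation of $G$ if for some partition $(A,B)$ of $V(G)$, removing all edges inside $A$ and inside $B$ from $G$ yields $H$. *)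

(* Defs.v *)
From mathcomp Require Import all_boot.
Set Implicit Arguments. Unset Strict Implicit. Unset Printing Implicit Defensive.

Definition is_graph (T : finType) (e : rel T) : Prop :=
  symmetric e /\ irreflexive e.

Definition graph_class := forall T : finType, rel T -> Prop.

Definition class_of_graphs (C : graph_class) : Prop :=
  forall (T : finType) (e : rel T), C T e -> is_graph e.

Definition iso_closed (C : graph_class) : Prop :=
  forall (T T' : finType) (e : rel T) (e' : rel T') (f : T' -> T),
    bijective f -> (forall x y, e' x y = e (f x) (f y)) -> C T e -> C T' e'.

Definition induced_closed (C : graph_class) : Prop :=
  forall (T : finType) (e : rel T) (X : {set T}),
    C T e -> C {x : T | x \in X} (fun x y => e (val x) (val y)).

Definition hereditary (C : graph_class) : Prop :=
  iso_closed C /\ induced_closed C.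

Definition closed_nbhd (T : finType) (e : rel T) (v : T) : {set T} :=
  [set u | (u == v) || e v u].

Definition shattered (T : finType) (e : rel T) (X : {set T}) : Prop :=
  forall S : {set T}, S \subset X -> exists v : T, closed_nbhd e v :&: X = S.

Definition infinite_VC_dim (C : graph_class) : Prop :=
  forall k : nat, exists (T : finType) (e : rel T) (X : {set T}),
    C T e /\ shattered e X /\ #|X| = k.

Definition bipartite_wrt (U : finType) (h : rel U) (A : {set U}) : Prop :=
  is_graph h /\ forall x y, h x y -> (x \in A) != (y \in A).

(* h with bipartition (A, ~:A) is a bipartisation of g via the partition
   (A', ~:A') of V(g): deleting edges inside A' and inside ~:A' from g gives
   a graph isomorphic to h via f, with f mapping A' onto A and ~:A' onto ~:A *)
Definition bipartisation_of (U : finType) (h : rel U) (A : {set U})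
    (T : finType) (g : rel T) : Prop :=
  exists (A' : {set T}) (f : T -> U),
    [/\ bijective f,
        (forall x, (f x \in A) = (x \in A')) &
        (forall x y, h (f x) (f y) = g x y && ((x \in A') != (y \in A')))].

(* Main.v *)
Require Import Defs.
From mathcomp Require Import all_boot.

Set Implicit Arguments. Unset Strict Implicit.

Section Core.
Variables (U : finType) (h : rel U) (A : {set U}).
Hypothesis hbip : bipartite_wrt h A.
Let m := #|U|.
Definition Idx := (('I_m.+1 * U) + U)%type.
Variables (T : finType) (e : rel T) (X : {set T}) (idx : Idx -> T).
Hypothesis idx_inj : injective idx.
Hypothesis idxX : forall i, idx i \in X.
Hypothesis shat : shattered e X.
Hypothesis ge : is_graph e.

Definition S (u : U) : {set T} :=
  [set z | [exists p : 'I_m.+1 * U, (z == idx (inl p)) && h u p.2]]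
    :|: [set idx (inr u)].

Lemma S_sub u : S u \subset X.
Proof.
apply/subsetP => z; rewrite !inE => /orP[/existsP[p /andP[/eqP -> _]]|/eqP ->];
  exact: idxX.
Qed.

Definition v (u : U) : T :=
  odflt (idx (inr u)) [pick w | closed_nbhd e w :&: X == S u].

Lemma vP u : closed_nbhd e (v u) :&: X = S u.
Proof.
rewrite /v; case: pickP => [w /eqP //|H].
have [w Hw] := shat (S_sub u).
by move: (H w); rewrite Hw eqxx.
Qed.

Lemma NP u z : z \in X -> (z \in S u) = (z == v u) || e (v u) z.
Proof. by move=> zX; rewrite -vP !inE zX andbT. Qed.

Lemma S_inl u p : (idx (inl p) \in S u) = h u p.2.
Proof.
rewrite !inE; apply/idP/idP.
- case/orP=> [/existsP[q /andP[/eqP /idx_inj [<-] //]]|/eqP /idx_inj //].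
- move=> H; apply/orP; left; apply/existsP; exists p; by rewrite eqxx H.
Qed.

Lemma S_inr u w : (idx (inr w) \in S u) = (w == u).
Proof.
rewrite !inE; apply/idP/idP.
- case/orP=> [/existsP[q /andP[/eqP /idx_inj //]]|/eqP /idx_inj [->] //].
- by move/eqP ->; rewrite eqxx orbT.
Qed.

Definition J : {set 'I_m.+1} :=
  [set j | [exists u, exists a, idx (inl (j, a)) == v u]].

Definition fJ (u : U) : 'I_m.+1 :=
  odflt ord0 (omap (fun p => p.1) [pick p | idx (inl p) == v u]).

Lemma J_sub : J \subset fJ @: setT.
Proof.
apply/subsetP => j; rewrite inE => /existsP[u /existsP[a /eqP Ha]].
apply/imsetP; exists u => //; rewrite /fJ; case: pickP => [p /eqP Hp|H].
  by rewrite -Hp in Ha; move/idx_inj: Ha => [<-].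
by move: (H (j, a)); rewrite Ha eqxx.
Qed.

Lemma exists_j : exists j, j \notin J.
Proof.
case: (boolP [exists j, j \notin J]) => [/existsP //|/existsPn H].
have : #|J| <= m.
  apply: leq_trans (subset_leq_card J_sub) _.
  by apply: leq_trans (leq_imset_card _ _) _; rewrite cardsT.
have -> : J = setT by apply/setP => j; rewrite [RHS]inE; move: (H j); rewrite negbK.
by rewrite cardsT card_ord ltnn.
Qed.

Variable j : 'I_m.+1.
Hypothesis hj : j \notin J.

Definition F (a : U) : T := if a \in A then idx (inl (j, a)) else v a.

Lemma v_notinl u a : idx (inl (j, a)) != v u.
Proof.
apply/negP => H; move: hj; rewrite inE; case/negP.
by apply/existsP; exists u; apply/existsP; exists a.
Qed.

Lemma F_inj : injective F.
Proof.
move=> a b; rewrite /F.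
case: (boolP (a \in A)) => Ha; case: (boolP (b \in A)) => Hb.
- by move/idx_inj => [].
- by move/eqP; rewrite (negbTE (v_notinl _ _)).
- by move/esym/eqP; rewrite (negbTE (v_notinl _ _)).
move=> Hv.
have : idx (inr a) \in S b by rewrite -vP -Hv vP S_inr.
by rewrite S_inr => /eqP.
Qed.

Lemma F_edges x y :
  h x y = e (F x) (F y) && ((x \in A) != (y \in A)).
Proof.
case: hbip => [[hs hi] hb].
have [es ei] := ge.
wlog Hx : x y / x \in A.
  move=> W; have [Hx|Hx] := boolP (x \in A).
    by move: (W x y Hx); rewrite Hx.
  have [Hy|Hy] := boolP (y \in A).
    by rewrite hs es; move: (W y x Hy); rewrite Hy (negbTE Hx).
  apply/idP/idP; first by move/hb; rewrite (negbTE Hx) (negbTE Hy).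
  by rewrite andbF.
have [Hy|Hy] := boolP (y \in A).
  apply/idP/idP; first by move/hb; rewrite Hx Hy.
  by rewrite Hx andbF.
rewrite Hx andbT /F Hx (negbTE Hy).
rewrite hs (_ : h y x = h y (j, x).2) // -S_inl NP ?idxX // (negbTE (v_notinl _ _)) /=.
by rewrite es.
Qed.

End Core.

Theorem mainTheorem5 (C : graph_class) :
  class_of_graphs C -> hereditary C -> infinite_VC_dim C ->
  forall (U : finType) (h : rel U) (A : {set U}),
    bipartite_wrt h A ->
    exists (T : finType) (g : rel T), C T g /\ bipartisation_of h A g.
Proof.
move=> Cg [Hiso Hind] Hvc U h A hbip.
have [T [e [X [CTe [shat cardX]]]]] := Hvc #|{: Idx U}|.
pose idx (i : Idx U) : T :=
  enum_val (cast_ord (esym cardX) (enum_rank i)) : T.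
have idx_inj : injective idx.
  move=> a b /enum_val_inj /cast_ord_inj /enum_rank_inj //.
have idxX : forall i, idx i \in X by move=> i; exact: enum_valP.
have ge := Cg _ _ CTe.
have [j hj] := exists_j h e X idx_inj.
pose FF := F h A e X idx j.
have Finj : injective FF := F_inj idx_inj idxX shat hj.
pose Y := FF @: setT.
pose W := {x : T | x \in Y}.
pose gW (x y : W) := e (val x) (val y).
have CW : C W gW := Hind T e Y CTe.
pose phi (a : U) : W := exist _ (FF a) (imset_f FF (in_setT a)).
have phib : bijective phi.
  apply: inj_card_bij.
    by move=> a b [] /Finj.
  by rewrite card_sig -[#|[eta _]|]/#|Y| card_imset // cardsT.
exists U, (fun x y => e (FF x) (FF y)); split.
  by apply: (Hiso W U gW _ phi phib) => //.
exists A, id; split => //; first by exists id.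
by move=> x y; exact: (F_edges hbip idx_inj idxX shat ge hj).
Qed.
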